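(* For every $n\ge1$, $$R^*_n=\inf_{\hat H}\ \sup_{\mu\in\mathbb{H}(\mathbb{X})}\mathbb{E}_{X_1,\dots,X_n\sim\mu^n}\Big[\big(\hat H(X_1,\dots,X_n)-H(\mu)\big)^2\Big]=\infty,$$ where the infimum is over all measurable functions $\hat H:\mathbb{X}^n\to\mathbb{R}$.
   Context: $\mathbb{X}$ is a countably infinite set; for a probability $\mu$ on $\mathbb{X}$, $f_\mu(x)=\mu(\{x\})$, $A_\mu=\{x:f_\mu(x)>0\}$, and $H(\mu)=-\sum_{x\in A_\mu}f_\mu(x)\log f_\mu(x)$. $\mathbb{H}(\mathbb{X})$ is the set of probability measures on $\mathbb{X}$ with $H(\mu)<\infty$. $\mu^n$ denotes the $n$-fold product measure (i.i.d. sample of size $n$). *)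

(* Defs.v *)
From Stdlib Require Import Reals List.
Open Scope R_scope.

Definition is_pmf {X : Type} (e : nat -> X) (f : X -> R) : Prop :=
  (forall x, 0 <= f x) /\ infinite_sum (fun k => f (e k)) 1.

Definition ent_term (p : R) : R := if Rlt_dec 0 p then - (p * ln p) else 0.

(* H(mu) = h, and in particular H(mu) < infinity. *)
Definition has_entropy {X : Type} (e : nat -> X) (f : X -> R) (h : R) : Prop :=
  infinite_sum (fun k => ent_term (f (e k))) h.

Definition sample_prob {X : Type} (f : X -> R) (s : list X) : R :=
  fold_right (fun x acc => f x * acc) 1 s.

(* finite partial sum of the (nonnegative) expectation series
   sum_s mu^n(s) (Hhat s - h)^2 over a finite list L of samples *)
Definition partial_risk {X : Type} (Hhat : list X -> R) (f : X -> R) (h : R)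
  (L : list (list X)) : R :=
  fold_right (fun s acc => sample_prob f s * (Hhat s - h) ^ 2 + acc) 0 L.

(* Main.v *)
Require Import Defs.
From Stdlib Require Import Reals List Lra Lia ZArith ClassicalEpsilon.
Open Scope R_scope.

Lemma nat_above : forall x, exists N : nat, x < INR N.
Proof.
  intro x. destruct (archimed x) as [H1 H2].
  destruct (Z_le_gt_dec (up x) 0) as [Hz|Hz].
  - exists 0%nat. simpl. apply IZR_le in Hz. lra.
  - exists (Z.to_nat (up x)). rewrite INR_IZR_INZ, Z2Nat.id by lia. lra.
Qed.

Lemma sum_stable : forall (u : nat -> R) N,
  (forall k, (k > N)%nat -> u k = 0) ->
  forall m, (m >= N)%nat -> sum_f_R0 u m = sum_f_R0 u N.
Proof.
  intros u N Hu m Hm. induction Hm.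
  - reflexivity.
  - simpl. rewrite Hu by lia. lra.
Qed.

Lemma inf_sum_fin : forall (u : nat -> R) N,
  (forall k, (k > N)%nat -> u k = 0) -> infinite_sum u (sum_f_R0 u N).
Proof.
  intros u N Hu eps He. exists N. intros m Hm.
  rewrite (sum_stable u N Hu m Hm). unfold R_dist. rewrite Rminus_diag, Rabs_R0. lra.
Qed.

Definition gN (N : nat) (k : nat) : R :=
  if Nat.eqb k 0 then / 2 else if Nat.leb k N then / (2 * INR N) else 0.

Lemma sum_gN : forall (F : R -> R) N m, (m <= N)%nat ->
  sum_f_R0 (fun k => F (gN N k)) m = F (/2) + INR m * F (/ (2 * INR N)).
Proof.
  intros F N m. induction m; intro Hm.
  - simpl. unfold gN. simpl. lra.
  - rewrite tech5, IHm by lia. unfold gN at 1.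
    replace (Nat.eqb (S m) 0) with false by reflexivity.
    replace (Nat.leb (S m) N) with true by (symmetry; apply Nat.leb_le; lia).
    rewrite S_INR. lra.
Qed.

Lemma gN_zero : forall F N, F 0 = 0 -> forall k, (k > N)%nat -> F (gN N k) = 0.
Proof.
  intros F N HF k Hk. unfold gN.
  replace (Nat.eqb k 0) with false by (symmetry; apply Nat.eqb_neq; lia).
  replace (Nat.leb k N) with false by (symmetry; apply Nat.leb_gt; lia). exact HF.
Qed.

Lemma sample_repeat : forall {X} (f : X -> R) x n,
  sample_prob f (repeat x n) = f x ^ n.
Proof. intros X f x n. induction n; simpl; [reflexivity| rewrite IHn; reflexivity]. Qed.

Theorem mainTheorem10 :
  forall (X : Type) (e : nat -> X),
    (forall i j, e i = e j -> i = j) ->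
    (forall x, exists k, e k = x) ->
    forall n : nat, (1 <= n)%nat ->
    forall (Hhat : list X -> R) (M : R),
      exists (f : X -> R) (h : R),
        is_pmf e f /\ has_entropy e f h /\
        exists L : list (list X),
          NoDup L /\ Forall (fun s => length s = n) L /\
          M <= partial_risk Hhat f h L.
Proof.
  intros X e Hinj Hsurj n Hn Hhat M.
  pose (idx := fun x => proj1_sig (constructive_indefinite_description _ (Hsurj x))).
  assert (Hidx : forall k, idx (e k) = k).
  { intro k. apply Hinj. unfold idx.
    destruct (constructive_indefinite_description _ (Hsurj (e k))); simpl; auto. }
  set (s0 := repeat (e 0%nat) n).
  set (c := Hhat s0).
  set (B := Rabs c + 2 ^ n * Rabs M + 1).
  destruct (nat_above (exp (2 * B))) as [N0 HN0].
  set (N := S N0).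
  assert (HNpos : 0 < INR N) by (unfold N; rewrite S_INR; pose proof (pos_INR N0); lra).
  assert (HNbig : exp (2 * B) < INR N) by (unfold N; rewrite S_INR; lra).
  exists (fun x => gN N (idx x)).
  set (ent := fun p => ent_term p).
  set (h := sum_f_R0 (fun k => ent_term (gN N k)) N).
  exists h.
  assert (Hf : forall k, (fun x => gN N (idx x)) (e k) = gN N k).
  { intro k. simpl. rewrite Hidx. reflexivity. }
  assert (Hent0 : ent_term 0 = 0).
  { unfold ent_term. destruct (Rlt_dec 0 0); lra. }
  assert (Hhval : h = ln 2 + ln (INR N) / 2).
  { unfold h. rewrite (sum_gN ent_term N N) by lia.
    unfold ent_term.
    destruct (Rlt_dec 0 (/2)) as [_|C]; [|exfalso; lra].
    destruct (Rlt_dec 0 (/ (2 * INR N))) as [_|C];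
      [|exfalso; apply C; apply Rinv_0_lt_compat; lra].
    rewrite !ln_Rinv by lra. rewrite ln_mult by lra. field. lra. }
  split; [split|split].
  - intro x. unfold gN. destruct (Nat.eqb _ _); [lra|].
    destruct (Nat.leb _ _); [|lra]. left. apply Rinv_0_lt_compat. lra.
  - unfold infinite_sum. intros.
    assert (Hs : infinite_sum (fun k => gN N k) 1).
    { replace 1 with (sum_f_R0 (fun k => id (gN N k)) N).
      + apply inf_sum_fin. intros; apply (gN_zero id); auto.
      + rewrite (sum_gN id N N) by lia. unfold id. field. lra. }
    destruct (Hs eps H) as [K HK]. exists K. intros m Hm.
    rewrite (sum_eq _ (fun k => gN N k)). apply HK; auto.
    intros i _. apply Hf.
  - unfold has_entropy. unfold h.
    assert (Hs : infinite_sum (fun k => ent_term (gN N k)) (sum_f_R0 (fun k => ent_term (gN N k)) N)).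
    { apply inf_sum_fin. intros; apply gN_zero; auto. }
    intros eps He. destruct (Hs eps He) as [K HK]. exists K. intros m Hm.
    rewrite (sum_eq _ (fun k => ent_term (gN N k))). apply HK; auto.
    intros i _. rewrite Hf. reflexivity.
  - exists (s0 :: nil). split; [|split].
    + constructor; [intros []|constructor].
    + constructor; [unfold s0; apply repeat_length|constructor].
    + unfold partial_risk. simpl fold_right. fold c. unfold s0. rewrite sample_repeat, Hf. fold s0. fold c.
      unfold gN at 1. simpl.
      assert (HlnN : 2 * B < ln (INR N)).
      { rewrite <- (ln_exp (2 * B)). apply ln_increasing; [apply exp_pos|lra]. }
      assert (Hln2 : 0 < ln 2) by (pose proof ln_lt_2; lra).
      assert (Hd : h - c >= 2 ^ n * Rabs M + 1).
      { rewrite Hhval. unfold B in HlnN. pose proof (Rle_abs c). lra. }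
      assert (Hp : 0 < 2 ^ n) by (apply pow_lt; lra).
      assert (Hq : (/ 2) ^ n * 2 ^ n = 1) by (rewrite <- Rpow_mult_distr, Rinv_l, pow1; lra).
      assert (Hq0 : 0 < (/ 2) ^ n) by (apply pow_lt; lra).
      assert (HM : M <= Rabs M) by apply Rle_abs.
      assert (Hsq : (c - h) ^ 2 >= 2 ^ n * Rabs M + 1).
      { pose proof (Rabs_pos M). assert (0 <= (h - c - 1) * (h - c)) by (apply Rmult_le_pos; nra). replace ((c - h) ^ 2) with ((h - c - 1) * (h - c) + (h - c)) by ring. nra. }
      assert (Hsq' : (c - h) ^ 2 >= 2 ^ n * Rabs M) by (pose proof (Rabs_pos M); lra).
      apply Rge_le in Hsq'.
      apply Rle_trans with ((/2)^n * (2 ^ n * Rabs M)).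
      * rewrite <- Rmult_assoc, Hq. lra.
      * rewrite Rplus_0_r. apply Rmult_le_compat_l; lra.
Qed.
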